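(* Let $X$ be a consonant Wilker space. Then $\Sigma\mathcal O(X)$ is sober.
   Context: $\mathcal O(X)$ is the lattice of open subsets of $X$ ordered by inclusion and $\Sigma\mathcal O(X)$ is this lattice with its Scott topology (a family $\mathcal F$ is Scott open iff it is an upper set and for every directed family $\mathcal D$ of open sets, $\bigcup\mathcal D\in\mathcal F$ implies $\mathcal D\cap\mathcal F\neq\emptyset$). $X$ is a Wilker space if for any open sets $U_1,U_2$ and compact set $K$ with $K\subseteq U_1\cup U_2$ there are compact sets $K_1\subseteq U_1$, $K_2\subseteq U_2$ with $K\subseteq K_1\cup K_2$. A $T_0$ space $X$ is consonant if for every Scott open $\mathcal F\subseteq\mathcal O(X)$ and every $U\in\mathcal F$ there is a compact saturated set $Q$ (saturated = upper set in the specialization order) with $U\in\Phi(Q)\subseteq\mathcal F$, where $\Phi(Q)=\{V\in\mathcal O(X)\mid Q\subseteq V\}$. A $T_0$ space is sober if every irreducible closed set equals $\overline{\{x\}}$ for some point $x$. *)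

(* Defs.v *)
From mathcomp Require Import all_boot all_order.
From mathcomp Require Import boolp classical_sets topology.
Set Implicit Arguments. Unset Strict Implicit. Unset Printing Implicit Defensive.
Local Open Scope classical_set_scope.

Section GenTop.
Variables (T : Type) (O : set (set T)).

Definition gclosed (C : set T) : Prop := O (~` C).

Definition gclosure (A : set T) : set T :=
  \bigcap_(C in [set C | gclosed C /\ A `<=` C]) C.

Definition girreducible (C : set T) : Prop :=
  C !=set0 /\
  forall C1 C2, gclosed C1 -> gclosed C2 -> C `<=` C1 `|` C2 ->
    C `<=` C1 \/ C `<=` C2.

Definition gT0 : Prop :=
  forall x y : T, (forall U, O U -> (U x <-> U y)) -> x = y.

Definition gsober : Prop :=
  gT0 /\ forall C, gclosed C -> girreducible C -> exists x, C = gclosure [set x].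
End GenTop.

Definition OX (X : topologicalType) := {U : set X | open U}.

Definition directedO (X : topologicalType) (D : set (OX X)) : Prop :=
  D !=set0 /\
  forall d1 d2, D d1 -> D d2 ->
    exists2 d3, D d3 & sval d1 `<=` sval d3 /\ sval d2 `<=` sval d3.

Definition scott_open (X : topologicalType) (F : set (OX X)) : Prop :=
  (forall U V : OX X, F U -> sval U `<=` sval V -> F V) /\
  (forall D : set (OX X), directedO D ->
     forall W : OX X, sval W = \bigcup_(d in D) sval d -> F W ->
       exists2 d, D d & F d).

Definition SigmaO_sober (X : topologicalType) : Prop :=
  gsober (@scott_open X).

(** saturated = upper set in the specialization order *)
Definition saturated (X : topologicalType) (Q : set X) : Prop :=
  forall x y : X, Q x -> (forall U, open U -> U x -> U y) -> Q y.

Definition wilker (X : topologicalType) : Prop :=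
  forall (U1 U2 K : set X), open U1 -> open U2 -> compact K ->
    K `<=` U1 `|` U2 ->
    exists K1 K2 : set X, [/\ compact K1, compact K2, K1 `<=` U1, K2 `<=` U2
                          & K `<=` K1 `|` K2].

Definition consonant (X : topologicalType) : Prop :=
  gT0 (@open X) /\
  forall F : set (OX X), scott_open F -> forall U : OX X, F U ->
    exists Q : set X, [/\ compact Q, saturated Q, Q `<=` sval U
      & forall V : OX X, Q `<=` sval V -> F V].

(* Main.v *)
Require Import Defs.
From mathcomp Require Import all_boot all_order.
From mathcomp Require Import boolp classical_sets topology.
Set Implicit Arguments. Unset Strict Implicit. Unset Printing Implicit Defensive.
Local Open Scope classical_set_scope.

Lemma OX_eq (X : topologicalType) (U V : OX X) : sval U = sval V -> U = V.
Proof. by case: U => U oU; case: V => V oV /= e; apply: eq_exist. Qed.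

Lemma down_scott (X : topologicalType) (U : OX X) :
  scott_open (fun V : OX X => ~ (sval V `<=` sval U)).
Proof.
split.
  move=> A B nA AB BU; apply: nA; exact: subset_trans AB BU.
move=> D _ W -> nW; apply/exists2P; apply: contrapT => H; apply: nW.
move=> x [d Dd dx]; apply: contrapT => nUx; apply: H; exists d; split => //.
by move=> dU; apply: nUx; apply: dU.
Qed.

Lemma Phi_scott (X : topologicalType) (K : set X) :
  compact K -> scott_open (fun V : OX X => K `<=` sval V).
Proof.
move=> cK; split.
  by move=> A B KA AB; exact: subset_trans KA AB.
move=> D [[d0 Dd0] Ddir] W -> KW.
apply/exists2P; apply: contrapT => H.
have nK : forall d, D d -> (K `\` sval d) !=set0.
  move=> d Dd; apply/set0P/negP => /eqP; rewrite setD_eq0 => Kd; apply: H; by exists d.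
pose G := filter_from D (fun d : OX X => K `\` sval d).
have FG : Filter G.
  apply: filter_from_filter; first by exists d0.
  move=> i j Di Dj; have [k Dk [ik jk]] := Ddir i j Di Dj.
  exists k => // x [Kx nkx]; split; split => //.
    by move=> ix; apply: nkx; apply: ik.
  by move=> jx; apply: nkx; apply: jk.
have PG : ProperFilter G by apply: filter_from_proper.
have GK : G K by exists d0 => // x [].
have [x [Kx clx]] := cK G PG GK.
have [d Dd dx] := KW x Kx.
have Gd : G (K `\` sval d) by exists d.
have nd : nbhs x (sval d) by apply: open_nbhs_nbhs; split => //; case: d {Dd Gd} dx.
by have [y [[_ ndy] dy]] := clx _ _ Gd nd.
Qed.

Theorem theorem4p18 (X : topologicalType) :
  consonant X -> wilker X -> SigmaO_sober X.
Proof.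
move=> [T0 cons] wil; split.
  move=> U V H; apply: OX_eq; apply/seteqP; split.
    apply: contrapT => nUV.
    have := (H _ (down_scott V)).1 nUV; exact.
  apply: contrapT => nVU.
  have := (H _ (down_scott U)).2 nVU; exact.
move=> C Cc [[U0 CU0] Cirr].
have bin : forall a b : OX X, C a -> C b ->
    C (exist _ (sval a `|` sval b) (openU (svalP a) (svalP b))).
  move=> a b Ca Cb; apply: contrapT => nC.
  have [Q [cQ _ Qab HQ]] := cons _ Cc _ nC.
  have [K1 [K2 [cK1 cK2 K1a K2b QK]]] :=
    wil _ _ _ (svalP a) (svalP b) cQ Qab.
  have cl1 : gclosed (@scott_open X) (~` (fun V : OX X => K1 `<=` sval V)).
    by rewrite /gclosed setCK; apply: Phi_scott.
  have cl2 : gclosed (@scott_open X) (~` (fun V : OX X => K2 `<=` sval V)).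
    by rewrite /gclosed setCK; apply: Phi_scott.
  have cov : C `<=` (~` (fun V : OX X => K1 `<=` sval V)) `|`
                   (~` (fun V : OX X => K2 `<=` sval V)).
    move=> V CV; apply: contrapT => H.
    have h1 : K1 `<=` sval V by apply: contrapT => h; apply: H; left.
    have h2 : K2 `<=` sval V by apply: contrapT => h; apply: H; right.
    apply: (HQ V _ CV) => x /QK [] ?; [exact: h1|exact: h2].
  by case: (Cirr _ _ cl1 cl2 cov) => h; [apply: (h _ Ca) | apply: (h _ Cb)].
pose Ucup := \bigcup_(d in C) sval d.
have oU : open Ucup by apply: bigcup_open => d _; exact: svalP.
pose u : OX X := exist _ Ucup oU.
have Cu : C u.
  apply: contrapT => nCu.
  have dirC : directedO C.
    split; first by exists U0.
    move=> d1 d2 C1 C2; exists (exist _ (sval d1 `|` sval d2) (openU (svalP d1) (svalP d2))).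
      exact: bin.
    by split => x hx /=; [left|right].
  have [d Cd nCd] := Cc.2 C dirC u erefl nCu.
  exact: nCd.
exists u; apply/seteqP; split.
  move=> V CV C' [C'c uC'].
  apply: contrapT => nV.
  have : (~` C') u.
    apply: (C'c.1 V) => // x Vx; by exists V.
  by apply; apply: uC'.
move=> V; apply; split => //; by move=> _ ->.
Qed.
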